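(* Let $k\ge 2$, $w=2^k-1$, $v=2^{k-1}$. Consider a rectangular region of cells $(c,r)$ with columns $c\in\{0,\dots,2v-1\}$ and rows $r\in\{-1,0,\dots,w\}$ (rows increase downward), all cells outside this region being unavailable. Row $-1$: the frog stands on $(0,-1)$ and all other cells of the row are blocked. Rows $0,\dots,w-1$: all cells empty. Row $w$: cells $(0,w)$ and $(2v-1,w)$ are empty, all others blocked. For $j\ge1$ let $\tilde U_j$ be the sequence of $2^j-1$ vertical jumps $(0,1)$ followed by one vertical jump $(0,2^j+2^{j-1}-1)$, and $\tilde U_j^R$ its reverse. Let $\tilde V'=\tilde U_{k-1},\dots,\tilde U_1$ and $\tilde V''=\tilde U_1^R,\dots,\tilde U_{k-1}^R$, and consider the jump sequence $$\tilde V=(0,v),\ \tilde V',\ (1,0),\ \tilde V'',\ (1,0),\ \tilde V',\ (1,0),\ \tilde V'',\ (1,0),\ \dots,\ (1,0),\ \tilde V',\ (1,0),\ \tilde V'',\ (0,v),\ (2v-1,0),$$ which contains $v$ blocks of the form $\tilde V',(1,0),\tilde V''$ separated by single jumps $(1,0)$. Then for every choice of pairwise distinct even rows $r_1,\dots,r_v\in\{0,2,\dots,w-1\}$ there is a valid execution of $\tilde V$ in which, for each $i=1,\dots,v$, the jump $(1,0)$ inside the $i$-th block is made within row $r_i$, and at the end all cells of rows $0,\dots,w-1$ and the cell $(2v-1,w)$ are visited and the frog stands on $(0,w)$.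
   Context: A frog on a grid performs a given sequence of jumps $(dx,dy)$; for each jump it chooses a sign $s\in\{-1,+1\}$ and moves from $(x,y)$ to $(x+s\,dx,\,y+s\,dy)$. An execution is valid if every landing cell is an available (non-blocked) cell of the region that has not been visited before (the starting cell counts as visited). *)

(* Defs.v *)
From Stdlib Require Import ZArith List Lia.
Import ListNotations.
Open Scope Z_scope.

Definition cell := (Z * Z)%type.   (* (column, row); rows increase downward *)
Definition jump := (Z * Z)%type.   (* (dx, dy) *)

Definition sgn (b : bool) : Z := if b then 1 else -1.

Definition step (p : cell) (b : bool) (d : jump) : cell :=
  (fst p + sgn b * fst d, snd p + sgn b * snd d).

Fixpoint landings (p : cell) (js : list jump) (ss : list bool) : list cell :=
  match js, ss with
  | d :: js', b :: ss' => let q := step p b d in q :: landings q js' ss'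
  | _, _ => []
  end.

Fixpoint valid_exec (avail : cell -> Prop) (visited : list cell) (p : cell)
    (js : list jump) (ss : list bool) : Prop :=
  match js, ss with
  | [], [] => True
  | d :: js', b :: ss' =>
      let q := step p b d in
      avail q /\ ~ In q visited /\ valid_exec avail (q :: visited) q js' ss'
  | _, _ => False
  end.

Definition vN (k : nat) : nat := Nat.pow 2 (k - 1).
Definition vZ (k : nat) : Z := Z.of_nat (vN k).
Definition wZ (k : nat) : Z := 2 ^ Z.of_nat k - 1.

Definition avail (k : nat) (x : cell) : Prop :=
  let c := fst x in let r := snd x in
  0 <= c < 2 * vZ k /\
  ( (r = -1 /\ c = 0)
  \/ (0 <= r < wZ k)
  \/ (r = wZ k /\ (c = 0 \/ c = 2 * vZ k - 1)) ).

Definition start : cell := (0, -1).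

Definition Ut (j : nat) : list jump :=
  repeat (0, 1) (Nat.pow 2 j - 1) ++
  [(0, 2 ^ Z.of_nat j + 2 ^ (Z.of_nat j - 1) - 1)].
Definition UtR (j : nat) : list jump := rev (Ut j).

Definition Vp (k : nat) : list jump := concat (map Ut (rev (seq 1 (k - 1)))).
Definition Vpp (k : nat) : list jump := concat (map UtR (seq 1 (k - 1))).

Definition block (k : nat) : list jump := Vp k ++ [(1, 0)] ++ Vpp k.

Definition Vt (k : nat) : list jump :=
  [(0, vZ k)] ++ block k ++
  concat (repeat ([(1, 0)] ++ block k) (vN k - 1)) ++
  [(0, vZ k); (2 * vZ k - 1, 0)].

(* 0-based index in V~ of the jump (1,0) inside the i-th block (i >= 1). *)
Definition mid_index (k i : nat) : nat :=
  (1 + (i - 1) * (length (block k) + 1) + length (Vp k))%nat.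

(* Main.v *)
Require Import Defs.
From Stdlib Require Import ZArith List Lia.
Import ListNotations.
Open Scope Z_scope.

Lemma last_cons_l {A} (a : A) l d : last (a :: l) d = last l a.
Proof.
  revert a d; induction l as [|x l IH]; intros a d; [reflexivity|].
  change (last (x :: l) d = last (x :: l) a). rewrite (IH x d), (IH x a). reflexivity.
Qed.

Lemma last_app_l {A} (l1 l2 : list A) d : last (l1 ++ l2) d = last l2 (last l1 d).
Proof.
  revert d; induction l1 as [|a l1 IH]; intro d; [reflexivity|].
  rewrite <- app_comm_cons, !last_cons_l. apply IH.
Qed.

Lemma landings_length p js ss : length js = length ss ->
  length (landings p js ss) = length js.
Proof.
  revert p ss; induction js as [|d js IH]; intros p [|b ss] H; simpl in *; try lia.
  f_equal; apply IH; lia.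
Qed.

Lemma landings_app p js1 js2 ss1 ss2 : length js1 = length ss1 ->
  landings p (js1 ++ js2) (ss1 ++ ss2) =
  landings p js1 ss1 ++ landings (last (landings p js1 ss1) p) js2 ss2.
Proof.
  revert p ss1; induction js1 as [|d js IH]; intros p [|b ss] H; cbn [length] in *; try lia.
  - reflexivity.
  - cbn [app landings]. rewrite IH by lia. rewrite last_cons_l. reflexivity.
Qed.

Lemma valid_of av vis p js ss : length js = length ss ->
  (forall q, In q (landings p js ss) -> av q) ->
  NoDup (landings p js ss) ->
  (forall q, In q (landings p js ss) -> ~ In q vis) ->
  valid_exec av vis p js ss.
Proof.
  revert vis p ss; induction js as [|d js IH]; intros vis p [|b ss] H Ha Hn Hv;
    simpl in *; try lia; auto.
  inversion Hn; subst.
  split; [auto|split; [auto|]].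
  apply IH; auto; try lia.
  intros q Hq [E|E]; [subst; contradiction|]. apply (Hv q); auto.
Qed.

Lemma step_vert c y s d : step (c, y) s (0, d) = (c, y + sgn s * d).
Proof. unfold step; simpl; f_equal; ring. Qed.

Lemma step_horiz c y : step (c, y) true (1, 0) = (c + 1, y).
Proof. unfold step; simpl; f_equal; ring. Qed.

Lemma units_spec c n : forall y s,
  let L := landings (c, y) (repeat (0, 1) n) (repeat s n) in
  (forall q, In q L <-> fst q = c /\ 1 <= sgn s * (snd q - y) <= Z.of_nat n) /\
  NoDup L /\ last L (c, y) = (c, y + sgn s * Z.of_nat n).
Proof.
  induction n as [|n IH]; intros y s L; subst L.
  - simpl. split; [intros q; split; [tauto|lia]|]. split; [constructor|f_equal; ring].
  - cbn [repeat landings]. rewrite step_vert.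
    destruct (IH (y + sgn s * 1) s) as [Hi [Hn Hl]].
    split; [|split].
    + intros [x z]. simpl In. rewrite Hi. simpl fst; simpl snd.
      destruct s; simpl sgn; split; intros H.
      * destruct H as [H|H]; [injection H; intros; subst; lia | lia].
      * destruct (Z.eq_dec z (y + 1)); [left; f_equal; lia| right; lia].
      * destruct H as [H|H]; [injection H; intros; subst; lia | lia].
      * destruct (Z.eq_dec z (y + -1 * 1)); [left; f_equal; lia| right; lia].
    + constructor; auto. rewrite Hi. cbn [fst snd]. destruct s; cbn [sgn]; lia.
    + rewrite last_cons_l, Hl. f_equal. lia.
Qed.

Lemma NoDup_sep (A B : list cell) (P : cell -> Prop) :
  NoDup A -> NoDup B -> (forall q, In q A -> P q) -> (forall q, In q B -> ~ P q) ->
  NoDup (A ++ B).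
Proof.
  intros HA HB H1 H2. apply NoDup_app; auto.
  intros a Ha Hb. exact (H2 a Hb (H1 a Ha)).
Qed.

Lemma Vp_SS n : Vp (S (S n)) = Ut (S n) ++ Vp (S n).
Proof.
  unfold Vp. replace (S (S n) - 1)%nat with (S n) by lia.
  replace (S n - 1)%nat with n by lia.
  rewrite seq_S, rev_app_distr. simpl. reflexivity.
Qed.

Lemma Vpp_SS n : Vpp (S (S n)) = Vpp (S n) ++ UtR (S n).
Proof.
  unfold Vpp. replace (S (S n) - 1)%nat with (S n) by lia.
  replace (S n - 1)%nat with n by lia.
  rewrite seq_S, map_app, concat_app. simpl. rewrite app_nil_r. reflexivity.
Qed.

Lemma J_val n : 2 ^ Z.of_nat (S n) + 2 ^ (Z.of_nat (S n) - 1) - 1 = 3 * 2 ^ Z.of_nat n - 1.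
Proof.
  rewrite Nat2Z.inj_succ, Z.pow_succ_r by lia.
  replace (Z.succ (Z.of_nat n) - 1) with (Z.of_nat n) by lia. ring.
Qed.

Lemma Ut_S n : Ut (S n) = repeat (0,1) (Nat.pow 2 (S n) - 1) ++ [(0, 3 * 2^Z.of_nat n - 1)].
Proof. unfold Ut. rewrite J_val. reflexivity. Qed.

Lemma UtR_S n : UtR (S n) = (0, 3 * 2^Z.of_nat n - 1) :: repeat (0,1) (Nat.pow 2 (S n) - 1).
Proof. unfold UtR. rewrite Ut_S, rev_app_distr, rev_repeat. reflexivity. Qed.

Lemma M_val n : Z.of_nat (Nat.pow 2 (S n) - 1) = 2 * 2^Z.of_nat n - 1.
Proof.
  assert (H : (1 <= Nat.pow 2 (S n))%nat).
  { pose proof (Nat.pow_nonzero 2 (S n)). lia. }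
  rewrite Nat2Z.inj_sub by lia. rewrite Nat2Z.inj_pow.
  change (Z.of_nat 2) with 2. rewrite Nat2Z.inj_succ, Z.pow_succ_r by lia. ring.
Qed.

Lemma pow2_pos n : 1 <= 2 ^ Z.of_nat n.
Proof. assert (0 < 2 ^ Z.of_nat n) by (apply Z.pow_pos_nonneg; lia). lia. Qed.

Lemma pow_S n : 2 ^ Z.of_nat (S n) = 2 * 2 ^ Z.of_nat n.
Proof. rewrite Nat2Z.inj_succ, Z.pow_succ_r by lia. reflexivity. Qed.

Lemma in3 (q p p' : cell) U L : In q (p :: U ++ p' :: L) <-> q = p \/ In q U \/ q = p' \/ In q L.
Proof. simpl. rewrite in_app_iff. simpl. intuition. Qed.

Lemma colA n : forall c b t, Z.Even (t - b) -> b <= t <= b + 2*2^Z.of_nat n - 2 ->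
 exists ss, length ss = length (Vp (S n)) /\
 let p := (c, b + 2^Z.of_nat n - 1) in let L := landings p (Vp (S n)) ss in
 (forall q, In q L -> fst q = c /\ b <= snd q <= b + 2*2^Z.of_nat n - 2) /\
 NoDup (p :: L) /\
 (forall y, b <= y <= b + 2*2^Z.of_nat n - 2 -> In (c,y) (p :: L)) /\
 last L p = (c, t).
Proof.
  induction n as [|n IH]; intros c b t He Ht.
  - exists []. change (2 ^ Z.of_nat 0) with 1 in *. cbn zeta.
    change (Vp 1) with (@nil jump). simpl. repeat split; try tauto.
    + constructor; [simpl; tauto| constructor].
    + intros y Hy. left. f_equal. lia.
    + f_equal; lia.
  - rewrite pow_S in *. pose proof (pow2_pos n) as HN.
    pose proof (M_val n) as HM.
    rewrite Vp_SS, Ut_S, <- app_assoc. cbn [app].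
    set (N := 2 ^ Z.of_nat n) in *. set (M := (Nat.pow 2 (S n) - 1)%nat) in *.
    destruct (Z_le_gt_dec (t - b) (2 * N - 2)) as [Hlo|Hhi].
    + destruct (IH c b t) as [ss [Hlen [Hr [Hnd [Hcov Hlast]]]]]; [exact He|lia|].
      exists (repeat true M ++ false :: ss). split.
      { rewrite !length_app, !repeat_length. cbn [length]. f_equal; f_equal; exact Hlen. }
      cbn zeta.
      rewrite landings_app by (rewrite !repeat_length; reflexivity).
      destruct (units_spec c M (b + 2 * N - 1) true) as [Hi [Hn Hl]].
      cbn zeta in Hi, Hn, Hl. rewrite Hl. cbn [landings]. rewrite step_vert.
      replace (b + 2 * N - 1 + sgn true * Z.of_nat M + sgn false * (3 * N - 1))
        with (b + N - 1) by (cbn [sgn]; lia).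
      cbn zeta in Hr, Hnd, Hcov, Hlast.
      set (U := landings (c, b + 2 * N - 1) (repeat (0, 1) M) (repeat true M)) in *.
      set (L := landings (c, b + N - 1) (Vp (S n)) ss) in *.
      cbn [sgn] in Hi.
      split; [|split; [|split]].
      * intros q Hq. apply in_app_iff in Hq. destruct Hq as [Hq|[Hq|Hq]].
        -- apply Hi in Hq. lia.
        -- subst q. cbn [fst snd]. lia.
        -- apply Hr in Hq. lia.
      * change (NoDup (((c, b + 2 * N - 1) :: U) ++ (c, b + N - 1) :: L)).
        apply NoDup_sep with (P := fun q => b + 2 * N - 1 <= snd q); auto.
        -- constructor; auto. rewrite Hi. cbn [fst snd]. lia.
        -- intros q [Hq|Hq]; [subst q; cbn [fst snd]; lia|apply Hi in Hq; lia].
        -- intros q [Hq|Hq]; [subst q; cbn [fst snd]; lia|apply Hr in Hq; lia].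
      * intros y Hy. apply in3.
        destruct (Z_le_gt_dec y (b + 2 * N - 2)).
        -- destruct (Hcov y) as [E|E]; [lia| |]; auto.
        -- destruct (Z.eq_dec y (b + 2 * N - 1)) as [E|E].
           ++ left. subst y. reflexivity.
           ++ right; left. apply Hi. cbn [fst snd]. lia.
      * rewrite last_app_l, last_cons_l. exact Hlast.
    + destruct (IH c (b + 2 * N) t) as [ss [Hlen [Hr [Hnd [Hcov Hlast]]]]].
      { destruct He as [m Hm]. exists (m - N). lia. }
      { destruct He as [m Hm]. lia. }
      exists (repeat false M ++ true :: ss). split.
      { rewrite !length_app, !repeat_length. cbn [length]. f_equal; f_equal; exact Hlen. }
      cbn zeta.
      rewrite landings_app by (rewrite !repeat_length; reflexivity).
      destruct (units_spec c M (b + 2 * N - 1) false) as [Hi [Hn Hl]].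
      cbn zeta in Hi, Hn, Hl. rewrite Hl. cbn [landings]. rewrite step_vert.
      replace (b + 2 * N - 1 + sgn false * Z.of_nat M + sgn true * (3 * N - 1))
        with (b + 2 * N + N - 1) by (cbn [sgn]; lia).
      cbn zeta in Hr, Hnd, Hcov, Hlast.
      set (U := landings (c, b + 2 * N - 1) (repeat (0, 1) M) (repeat false M)) in *.
      set (L := landings (c, b + 2 * N + N - 1) (Vp (S n)) ss) in *.
      cbn [sgn] in Hi.
      split; [|split; [|split]].
      * intros q Hq. apply in_app_iff in Hq. destruct Hq as [Hq|[Hq|Hq]].
        -- apply Hi in Hq. lia.
        -- subst q. cbn [fst snd]. lia.
        -- apply Hr in Hq. lia.
      * change (NoDup (((c, b + 2 * N - 1) :: U) ++ (c, b + 2 * N + N - 1) :: L)).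
        apply NoDup_sep with (P := fun q => snd q <= b + 2 * N - 1); auto.
        -- constructor; auto. rewrite Hi. cbn [fst snd]. lia.
        -- intros q [Hq|Hq]; [subst q; cbn [fst snd]; lia|apply Hi in Hq; lia].
        -- intros q [Hq|Hq]; [subst q; cbn [fst snd]; lia|apply Hr in Hq; lia].
      * intros y Hy. apply in3.
        destruct (Z_le_gt_dec (b + 2 * N) y).
        -- destruct (Hcov y) as [E|E]; [lia| |]; auto.
        -- destruct (Z.eq_dec y (b + 2 * N - 1)) as [E|E].
           ++ left. subst y. reflexivity.
           ++ right; left. apply Hi. cbn [fst snd]. lia.
      * rewrite last_app_l, last_cons_l. exact Hlast.
Qed.

Lemma colB n : forall c b y0, Z.Even (y0 - b) -> b <= y0 <= b + 2*2^Z.of_nat n - 2 ->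
 exists ss, length ss = length (Vpp (S n)) /\
 let p := (c, y0) in let L := landings p (Vpp (S n)) ss in
 (forall q, In q L -> fst q = c /\ b <= snd q <= b + 2*2^Z.of_nat n - 2) /\
 NoDup (p :: L) /\
 (forall y, b <= y <= b + 2*2^Z.of_nat n - 2 -> In (c,y) (p :: L)) /\
 last L p = (c, b + 2^Z.of_nat n - 1).
Proof.
  induction n as [|n IH]; intros c b t He Ht.
  - exists []. change (2 ^ Z.of_nat 0) with 1 in *. cbn zeta.
    change (Vpp 1) with (@nil jump). simpl. repeat split; try tauto.
    + constructor; [simpl; tauto| constructor].
    + intros y Hy. left. f_equal. lia.
    + f_equal; lia.
  - rewrite pow_S in *. pose proof (pow2_pos n) as HN.
    pose proof (M_val n) as HM.
    rewrite Vpp_SS, UtR_S.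
    set (N := 2 ^ Z.of_nat n) in *. set (M := (Nat.pow 2 (S n) - 1)%nat) in *.
    destruct (Z_le_gt_dec (t - b) (2 * N - 2)) as [Hlo|Hhi].
    + destruct (IH c b t) as [ss [Hlen [Hr [Hnd [Hcov Hlast]]]]]; [exact He|lia|].
      exists (ss ++ true :: repeat false M). split.
      { rewrite !length_app. cbn [length]. rewrite !repeat_length. f_equal. exact Hlen. }
      cbn zeta. cbn zeta in Hr, Hnd, Hcov, Hlast.
      rewrite landings_app by (symmetry; exact Hlen).
      rewrite Hlast. cbn [landings]. rewrite step_vert.
      replace (b + N - 1 + sgn true * (3 * N - 1)) with (b + 4 * N - 2) by (cbn [sgn]; lia).
      destruct (units_spec c M (b + 4 * N - 2) false) as [Hi [Hn Hl]].
      cbn zeta in Hi, Hn, Hl.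
      set (U := landings (c, b + 4 * N - 2) (repeat (0, 1) M) (repeat false M)) in *.
      set (L := landings (c, t) (Vpp (S n)) ss) in *.
      cbn [sgn] in Hi.
      split; [|split; [|split]].
      * intros q Hq. apply in_app_iff in Hq. destruct Hq as [Hq|[Hq|Hq]].
        -- apply Hr in Hq. lia.
        -- subst q. cbn [fst snd]. lia.
        -- apply Hi in Hq. lia.
      * change (NoDup (((c, t) :: L) ++ (c, b + 4 * N - 2) :: U)).
        apply NoDup_sep with (P := fun q => snd q <= b + 2 * N - 2); auto.
        -- constructor; auto. rewrite Hi. cbn [fst snd]. lia.
        -- intros q [Hq|Hq]; [subst q; cbn [fst snd]; lia|apply Hr in Hq; lia].
        -- intros q [Hq|Hq]; [subst q; cbn [fst snd]; lia|apply Hi in Hq; lia].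
      * intros y Hy.
        destruct (Z_le_gt_dec y (b + 2 * N - 2)).
        -- destruct (Hcov y) as [E|E]; [lia| |].
           ++ left; exact E.
           ++ right. apply in_app_iff. left; exact E.
        -- right. apply in_app_iff. right.
           destruct (Z.eq_dec y (b + 4 * N - 2)) as [E|E].
           ++ left. subst y. reflexivity.
           ++ right. apply Hi. cbn [fst snd]. lia.
      * rewrite last_app_l, last_cons_l. rewrite Hl. f_equal. cbn [sgn]. lia.
    + destruct (IH c (b + 2 * N) t) as [ss [Hlen [Hr [Hnd [Hcov Hlast]]]]].
      { destruct He as [m Hm]. exists (m - N). lia. }
      { destruct He as [m Hm]. lia. }
      assert (Htb : b + 2 * N <= t) by (destruct He as [m Hm]; lia).
      exists (ss ++ false :: repeat true M). split.
      { rewrite !length_app. cbn [length]. rewrite !repeat_length. f_equal. exact Hlen. }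
      cbn zeta. cbn zeta in Hr, Hnd, Hcov, Hlast.
      rewrite landings_app by (symmetry; exact Hlen).
      rewrite Hlast. cbn [landings]. rewrite step_vert.
      replace (b + 2 * N + N - 1 + sgn false * (3 * N - 1)) with b by (cbn [sgn]; lia).
      destruct (units_spec c M b true) as [Hi [Hn Hl]].
      cbn zeta in Hi, Hn, Hl.
      set (U := landings (c, b) (repeat (0, 1) M) (repeat true M)) in *.
      set (L := landings (c, t) (Vpp (S n)) ss) in *.
      cbn [sgn] in Hi.
      split; [|split; [|split]].
      * intros q Hq. apply in_app_iff in Hq. destruct Hq as [Hq|[Hq|Hq]].
        -- apply Hr in Hq. lia.
        -- subst q. cbn [fst snd]. lia.
        -- apply Hi in Hq. lia.
      * change (NoDup (((c, t) :: L) ++ (c, b) :: U)).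
        apply NoDup_sep with (P := fun q => b + 2 * N <= snd q); auto.
        -- constructor; auto. rewrite Hi. cbn [fst snd]. lia.
        -- intros q [Hq|Hq]; [subst q; cbn [fst snd]; lia|apply Hr in Hq; lia].
        -- intros q [Hq|Hq]; [subst q; cbn [fst snd]; lia|apply Hi in Hq; lia].
      * intros y Hy.
        destruct (Z_le_gt_dec (b + 2 * N) y).
        -- destruct (Hcov y) as [E|E]; [lia| |].
           ++ left; exact E.
           ++ right. apply in_app_iff. left; exact E.
        -- right. apply in_app_iff. right.
           destruct (Z.eq_dec y b) as [E|E].
           ++ left. subst y. reflexivity.
           ++ right. apply Hi. cbn [fst snd]. lia.
      * rewrite last_app_l, last_cons_l. rewrite Hl. f_equal. cbn [sgn]. lia.
Qed.

Definition Bl (k m : nat) : list jump := block k ++ concat (repeat ([(1, 0)] ++ block k) m).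

Lemma Bl0 k : Bl k 0 = block k.
Proof. unfold Bl. simpl. apply app_nil_r. Qed.

Lemma Bl_S k m : Bl k (S m) = block k ++ (1, 0) :: Bl k m.
Proof. unfold Bl. simpl. reflexivity. Qed.

Lemma Block1 n : forall c0 e, Z.Even e -> 0 <= e <= 2 * 2^Z.of_nat n - 2 ->
 exists ss, length ss = length (block (S n)) /\
 let p := (c0, 2^Z.of_nat n - 1) in let L := landings p (block (S n)) ss in
 (forall q, In q L -> c0 <= fst q <= c0 + 1 /\ 0 <= snd q <= 2 * 2^Z.of_nat n - 2) /\
 NoDup (p :: L) /\
 (forall x y, c0 <= x <= c0 + 1 -> 0 <= y <= 2 * 2^Z.of_nat n - 2 -> In (x, y) (p :: L)) /\
 last L p = (c0 + 1, 2^Z.of_nat n - 1) /\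
 (forall d, (length (Vp (S n)) < length L)%nat /\ nth (length (Vp (S n))) L d = (c0 + 1, e)).
Proof.
  intros c0 e He Hr.
  destruct (colA n c0 0 e) as [ssA [HlA [HrA [HnA [HcA HlaA]]]]];
    [rewrite Z.sub_0_r; exact He| lia|].
  destruct (colB n (c0 + 1) 0 e) as [ssB [HlB [HrB [HnB [HcB HlaB]]]]];
    [rewrite Z.sub_0_r; exact He| lia|].
  cbn zeta in *. rewrite !Z.add_0_l in *.
  set (N := 2 ^ Z.of_nat n) in *.
  exists (ssA ++ true :: ssB). split.
  { unfold block. rewrite !length_app. cbn [length app]. rewrite HlA, HlB. reflexivity. }
  cbn zeta. unfold block. cbn [app].
  rewrite landings_app by (symmetry; exact HlA).
  rewrite HlaA. cbn [landings]. rewrite step_horiz.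
  set (LA := landings (c0, N - 1) (Vp (S n)) ssA) in *.
  set (LB := landings (c0 + 1, e) (Vpp (S n)) ssB) in *.
  assert (HLA : length LA = length (Vp (S n))).
  { unfold LA. apply landings_length. symmetry; exact HlA. }
  split; [|split; [|split; [|split]]].
  - intros q Hq. apply in_app_iff in Hq. destruct Hq as [Hq|[Hq|Hq]].
    + apply HrA in Hq. lia.
    + subst q. cbn [fst snd]. lia.
    + apply HrB in Hq. lia.
  - change (NoDup (((c0, N - 1) :: LA) ++ (c0 + 1, e) :: LB)).
    apply NoDup_sep with (P := fun q => fst q = c0); auto.
    + intros q [Hq|Hq]; [subst q; reflexivity|apply HrA in Hq; lia].
    + intros q [Hq|Hq]; [subst q; cbn [fst]; lia|apply HrB in Hq; lia].
  - intros x y Hx Hy.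
    destruct (Z.eq_dec x c0) as [E|E].
    + subst x. destruct (HcA y Hy) as [E|E]; [left; exact E|].
      right. apply in_app_iff. left; exact E.
    + replace x with (c0 + 1) by lia. right. apply in_app_iff. right.
      exact (HcB y Hy).
  - rewrite last_app_l, last_cons_l. exact HlaB.
  - intro d. rewrite length_app. cbn [length]. split; [lia|].
    rewrite <- HLA. replace (length LA) with (length LA + 0)%nat by lia.
    rewrite app_nth2_plus. reflexivity.
Qed.

Lemma Gm n m : forall c0 (rr : nat -> Z),
 (forall i, (i <= m)%nat -> Z.Even (rr i) /\ 0 <= rr i <= 2 * 2^Z.of_nat n - 2) ->
 exists ss, length ss = length (Bl (S n) m) /\
 let p := (c0, 2^Z.of_nat n - 1) in let L := landings p (Bl (S n) m) ss in
 (forall q, In q L -> c0 <= fst q <= c0 + 2 * Z.of_nat m + 1 /\ 0 <= snd q <= 2 * 2^Z.of_nat n - 2) /\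
 NoDup (p :: L) /\
 (forall x y, c0 <= x <= c0 + 2 * Z.of_nat m + 1 -> 0 <= y <= 2 * 2^Z.of_nat n - 2 -> In (x, y) (p :: L)) /\
 last L p = (c0 + 2 * Z.of_nat m + 1, 2^Z.of_nat n - 1) /\
 (forall i d, (i <= m)%nat ->
    (i * (length (block (S n)) + 1) + length (Vp (S n)) < length L)%nat /\
    snd (nth (i * (length (block (S n)) + 1) + length (Vp (S n))) L d) = rr i).
Proof.
  set (N := 2 ^ Z.of_nat n).
  induction m as [|m IH]; intros c0 rr Hrr.
  - rewrite Bl0. destruct (Hrr 0%nat (le_n _)) as [He Hr].
    destruct (Block1 n c0 (rr 0%nat) He Hr) as [ss [Hl [H1 [H2 [H3 [H4 H5]]]]]].
    exists ss. split; [exact Hl|]. cbn zeta in *. fold N in H1, H2, H3, H4, H5 |- *.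
    change (Z.of_nat 0) with 0.
    split; [|split; [|split; [|split]]].
    + intros q Hq. apply H1 in Hq. lia.
    + exact H2.
    + intros x y Hx Hy. apply H3; lia.
    + rewrite H4. f_equal. lia.
    + intros i d Hi. assert (i = 0%nat) by lia. subst i.
      rewrite Nat.mul_0_l, Nat.add_0_l. destruct (H5 d) as [A B]. rewrite B. auto.
  - rewrite Bl_S. destruct (Hrr 0%nat ltac:(lia)) as [He Hr].
    destruct (Block1 n c0 (rr 0%nat) He Hr) as [ss1 [Hl1 [H1 [H2 [H3 [H4 H5]]]]]].
    destruct (IH (c0 + 2) (fun i => rr (S i))) as [ss2 [Hl2 [G1 [G2 [G3 [G4 G5]]]]]].
    { intros i Hi. apply Hrr. lia. }
    cbn zeta in *. fold N in H1, H2, H3, H4, H5, G1, G2, G3, G4, G5 |- *.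
    exists (ss1 ++ true :: ss2). split.
    { rewrite !length_app. cbn [length]. rewrite Hl1, Hl2. reflexivity. }
    rewrite landings_app by (symmetry; exact Hl1).
    rewrite H4. cbn [landings]. rewrite step_horiz.
    replace (c0 + 1 + 1) with (c0 + 2) by lia.
    set (L1 := landings (c0, N - 1) (block (S n)) ss1) in *.
    set (L2 := landings (c0 + 2, N - 1) (Bl (S n) m) ss2) in *.
    assert (HL1 : length L1 = length (block (S n))).
    { unfold L1. apply landings_length. symmetry; exact Hl1. }
    split; [|split; [|split; [|split]]].
    + intros q Hq. apply in_app_iff in Hq. destruct Hq as [Hq|[Hq|Hq]].
      * apply H1 in Hq. lia.
      * subst q. cbn [fst snd]. lia.
      * apply G1 in Hq. lia.
    + change (NoDup (((c0, N - 1) :: L1) ++ (c0 + 2, N - 1) :: L2)).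
      apply NoDup_sep with (P := fun q => fst q <= c0 + 1); auto.
      * intros q [Hq|Hq]; [subst q; cbn [fst]; lia|apply H1 in Hq; lia].
      * intros q [Hq|Hq]; [subst q; cbn [fst]; lia|apply G1 in Hq; lia].
    + intros x y Hx Hy.
      destruct (Z_le_gt_dec x (c0 + 1)).
      * destruct (H3 x y ltac:(lia) Hy) as [E|E]; [left; exact E|].
        right. apply in_app_iff. left; exact E.
      * right. apply in_app_iff. right. apply G3; lia.
    + rewrite last_app_l, last_cons_l, G4. f_equal. lia.
    + intros [|i] d Hi.
      * rewrite Nat.mul_0_l, Nat.add_0_l. destruct (H5 d) as [A B].
        rewrite length_app. split; [lia|].
        rewrite app_nth1 by exact A. rewrite B. reflexivity.
      * destruct (G5 i d ltac:(lia)) as [A B].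
        replace (S i * (length (block (S n)) + 1) + length (Vp (S n)))%nat
          with (length L1 + S (i * (length (block (S n)) + 1) + length (Vp (S n))))%nat
          by (rewrite HL1; nia).
        rewrite length_app. cbn [length]. split; [lia|].
        rewrite app_nth2_plus. cbn [nth]. exact B.
Qed.

Lemma Vt_eq k : Vt k = (0, vZ k) :: Bl k (vN k - 1) ++ [(0, vZ k); (2 * vZ k - 1, 0)].
Proof. unfold Vt, Bl. rewrite <- app_assoc. reflexivity. Qed.

Theorem mainTheorem10 (k : nat) (hk : (2 <= k)%nat) (r : nat -> Z)
  (hr_even : forall i, (1 <= i <= vN k)%nat -> Z.Even (r i))
  (hr_range : forall i, (1 <= i <= vN k)%nat -> 0 <= r i <= wZ k - 1)
  (hr_dist : forall i j, (1 <= i <= vN k)%nat -> (1 <= j <= vN k)%nat ->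
               i <> j -> r i <> r j) :
  exists ss : list bool,
    valid_exec (avail k) [start] start (Vt k) ss /\
    (forall i, (1 <= i <= vN k)%nat ->
       snd (nth (mid_index k i) (landings start (Vt k) ss) start) = r i) /\
    (forall c rr, 0 <= c < 2 * vZ k -> 0 <= rr < wZ k ->
       In (c, rr) (start :: landings start (Vt k) ss)) /\
    In (2 * vZ k - 1, wZ k) (start :: landings start (Vt k) ss) /\
    last (landings start (Vt k) ss) start = (0, wZ k).
Proof.
  destruct k as [|n]; [lia|].
  assert (HvN : vN (S n) = Nat.pow 2 n) by (unfold vN; f_equal; lia).
  assert (HvN1 : (1 <= Nat.pow 2 n)%nat) by (pose proof (Nat.pow_nonzero 2 n); lia).
  assert (HvZ : vZ (S n) = 2 ^ Z.of_nat n).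
  { unfold vZ. rewrite HvN, Nat2Z.inj_pow. reflexivity. }
  assert (HwZ : wZ (S n) = 2 * 2 ^ Z.of_nat n - 1) by (unfold wZ; rewrite pow_S; reflexivity).
  pose proof (pow2_pos n) as HN.
  set (m := (Nat.pow 2 n - 1)%nat).
  assert (Hm : Z.of_nat m = 2 ^ Z.of_nat n - 1).
  { unfold m. rewrite Nat2Z.inj_sub by lia. rewrite Nat2Z.inj_pow. reflexivity. }
  destruct (Gm n m 0 (fun i => r (S i))) as [ss [Hl [G1 [G2 [G3 [G4 G5]]]]]].
  { intros i Hi. split.
    - apply hr_even. rewrite HvN. lia.
    - pose proof (hr_range (S i)) as H. rewrite HwZ, HvN in H. specialize (H ltac:(lia)). lia. }
  cbn zeta in *.
  set (N := 2 ^ Z.of_nat n) in *.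
  set (LG := landings (0, N - 1) (Bl (S n) m) ss) in *.
  exists (true :: ss ++ [true; false]).
  assert (Heq : landings start (Vt (S n)) (true :: ss ++ [true; false]) =
                (0, N - 1) :: LG ++ [(2 * N - 1, 2 * N - 1); (0, 2 * N - 1)]).
  { rewrite Vt_eq, HvZ, HvN. fold m. unfold start. cbn [landings].
    rewrite step_vert. replace (-1 + sgn true * N) with (N - 1) by (cbn [sgn]; lia).
    f_equal. rewrite landings_app by (symmetry; exact Hl). fold LG. rewrite G4.
    f_equal. cbn [landings]. rewrite step_vert.
    replace (0 + 2 * Z.of_nat m + 1) with (2 * N - 1) by lia.
    replace (N - 1 + sgn true * N) with (2 * N - 1) by (cbn [sgn]; lia).
    f_equal. f_equal. unfold step. cbn [fst snd sgn]. f_equal; lia. }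
  assert (HL : forall q, In q LG -> 0 <= fst q <= 2 * N - 1 /\ 0 <= snd q <= 2 * N - 2).
  { intros q Hq. apply G1 in Hq. lia. }
  assert (HLG : length LG = length (Bl (S n) m)).
  { unfold LG. apply landings_length. symmetry; exact Hl. }
  rewrite Heq. rewrite HvZ, HwZ, HvN. fold N.
  split; [|split; [|split; [|split]]].
  - apply valid_of.
    + rewrite Vt_eq. cbn [length]. rewrite !length_app, HvN. fold m. cbn [length].
      f_equal. f_equal. exact (eq_sym Hl).
    + rewrite Heq. intros q Hq.
      unfold avail. rewrite HvZ, HwZ. fold N.
      destruct Hq as [Hq|Hq]; [subst q; cbn [fst snd]; lia|].
      apply in_app_iff in Hq. destruct Hq as [Hq|Hq].
      * apply HL in Hq. lia.
      * destruct Hq as [Hq|[Hq|[]]]; subst q; cbn [fst snd]; lia.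
    + rewrite Heq. change (NoDup (((0, N - 1) :: LG) ++ [(2 * N - 1, 2 * N - 1); (0, 2 * N - 1)])).
      apply NoDup_sep with (P := fun q => snd q <= 2 * N - 2); auto.
      * constructor; [intros [E|[]]; apply (f_equal fst) in E; cbn [fst] in E; lia| constructor; [intros []|constructor]].
      * intros q [Hq|Hq]; [subst q; cbn [snd]; lia|apply HL in Hq; lia].
      * intros q [Hq|[Hq|[]]]; subst q; cbn [snd]; lia.
    + rewrite Heq. intros q Hq [E|[]]. subst q. unfold start in Hq.
      destruct Hq as [Hq|Hq]; [apply (f_equal snd) in Hq; cbn [snd] in Hq; lia|].
      apply in_app_iff in Hq. destruct Hq as [Hq|Hq].
      * apply HL in Hq. cbn [snd] in Hq. lia.
      * destruct Hq as [Hq|[Hq|[]]]; apply (f_equal snd) in Hq; cbn [snd] in Hq; lia.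
  - intros i Hi. unfold mid_index.
    destruct (G5 (i - 1)%nat start ltac:(lia)) as [A B].
    replace (1 + (i - 1) * (length (block (S n)) + 1) + length (Vp (S n)))%nat
      with (S ((i - 1) * (length (block (S n)) + 1) + length (Vp (S n))))%nat by lia.
    cbn [nth]. rewrite app_nth1 by exact A. rewrite B. f_equal. lia.
  - intros c rr Hc Hr. right. destruct (G3 c rr ltac:(lia) ltac:(lia)) as [E|E].
    + left; exact E.
    + right. apply in_app_iff. left; exact E.
  - right. right. apply in_app_iff. right. left. reflexivity.
  - rewrite last_cons_l, last_app_l. reflexivity.
Qed.
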